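(* The size $z_{End}$ of the LZ-End factorization satisfies, for each edit type $\ast\in\{\mathrm{sub},\mathrm{ins},\mathrm{del}\}$ (the alphabet being allowed to contain as many distinct characters as needed): $\liminf_{n\to\infty}\mathsf{MS}_{\ast}(z_{End},n)\ge 2$, $\mathsf{AS}_{\ast}(z_{End},n)\ge z_{End}-\Theta(\sqrt{z_{End}})$, and $\mathsf{AS}_{\ast}(z_{End},n)=\Omega(\sqrt n)$.
   Context: $\mathsf{ed}$ is the edit distance. $\mathsf{MS}_{\mathrm{sub}}(C,n)=\max_{T\in\Sigma^n}\{C(T')/C(T): T'\in\Sigma^n,\ \mathsf{ed}(T,T')=1\}$, with $\mathsf{MS}_{\mathrm{ins}},\mathsf{MS}_{\mathrm{del}}$ analogous for $T'$ of length $n+1$, resp. $n-1$, and $\mathsf{AS}_\ast$ analogous with $C(T')-C(T)$. Bounds in terms of $z_{End}$ refer to $z_{End}(T)$ of the original string and assert existence of strings $T$ (with $z_{End}(T)$ arbitrarily large) and edited $T'$ achieving them. The LZ-End factorization of $T$ (length $n$) is $T=f_1\cdots f_z$ where for each $1\le i<z$, $f_i[1..|f_i|-1]$ is the longest prefix of $f_i\cdots f_z$ that occurs as a suffix of some string in $\{\varepsilon, f_1, f_1f_2,\ldots,f_1\cdots f_{i-1}\}$ (so $f_i$ is one character longer), and $f_z$ is the remaining suffix; $z_{End}(T)=z$. *)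

(* Defs.v *)
From mathcomp Require Import all_boot.
Set Implicit Arguments. Unset Strict Implicit. Unset Printing Implicit Defensive.

(* Strings are sequences over the (countably infinite) alphabet nat, so
   that "as many distinct characters as needed" are available. *)
Notation str := (seq nat).

Fixpoint ed (s t : str) {struct s} : nat :=
  match s with
  | [::] => size t
  | x :: s' =>
      let fix edx (t : str) : nat :=
        match t with
        | [::] => size s
        | y :: t' => minn (minn (ed s' t).+1 (edx t').+1) (ed s' t' + (x != y))
        end
      in edx t
  end.

(* Given the phrases [done] = f_1 .. f_{i-1} already produced and the remaining
   suffix [rest] = f_i ... f_z, the length of the longest prefix of [rest]
   occurring as a suffix of some string in {eps, f_1, f_1 f_2, ..., f_1..f_{i-1}}. *)
Definition lzend_match (done : seq str) (rest : str) : nat :=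
  \max_(L < (size rest).+1 |
        has (fun j => suffix (take L rest) (flatten (take j done)))
            (iota 0 (size done).+1)) L.

(* Greedy computation: the next phrase is that prefix plus one character,
   or the whole remaining suffix if no further character is available
   (this is the last phrase f_z). *)
Fixpoint lzend_rec (fuel : nat) (done : seq str) (rest : str) : seq str :=
  match fuel with
  | 0 => [::]
  | fuel'.+1 =>
      if rest is [::] then [::] else
      let f := take (lzend_match done rest).+1 rest in
      f :: lzend_rec fuel' (rcons done f) (drop (lzend_match done rest).+1 rest)
  end.

Definition lzend (T : str) : seq str := lzend_rec (size T) [::] T.

Definition zEnd (T : str) : nat := size (lzend T).

Inductive edit_kind := Sub | Ins | Del.

Definition edlen (k : edit_kind) (n : nat) : nat :=
  match k with Sub => n | Ins => n.+1 | Del => n.-1 end.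

(* T' is a candidate in the definition of MS_k / AS_k for T *)
Definition is_edit (k : edit_kind) (T T' : str) : Prop :=
  size T' = edlen k (size T) /\ ed T T' = 1.

(* Main.v *)
Require Import Defs.
From mathcomp Require Import all_boot zify.
Set Implicit Arguments. Unset Strict Implicit. Unset Printing Implicit Defensive.

Lemma edE x s y t : ed (x::s) (y::t) = minn (minn (ed s (y::t)).+1 (ed (x::s) t).+1) (ed s t + (x != y)).
Proof. by []. Qed.

Lemma ed_nil_l t : ed [::] t = size t. Proof. by []. Qed.
Lemma ed_nil_r s : ed s [::] = size s. Proof. by case: s. Qed.

Lemma ed_consxx x s t : ed (x::s) (x::t) <= ed s t.
Proof. rewrite edE eqxx addn0; lia. Qed.

Lemma ed_refl s : ed s s = 0.
Proof. elim: s => // x s IH; apply/eqP; rewrite -leqn0 -IH; exact: ed_consxx. Qed.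

Lemma ed_cat p s t : ed (p ++ s) (p ++ t) <= ed s t.
Proof. elim: p => //= x p IH; exact: leq_trans (ed_consxx _ _ _) IH. Qed.

Lemma ed0 s t : ed s t = 0 -> s = t.
Proof.
elim: s t => [|x s IH] [|y t] //.
rewrite edE => H.
have H1 : ed s t + (x != y) = 0 by lia.
move: H1; case: eqP => [->|] /=; last by rewrite addn1.
by rewrite addn0 => /IH ->.
Qed.

Lemma ed_sub a b R : ed (a::R) (b::R) <= 1.
Proof. rewrite edE ed_refl; lia. Qed.

Lemma ed_ins b R : ed R (b::R) <= 1.
Proof. case: R => [|x R] //. rewrite edE ed_refl; lia. Qed.

Lemma ed_del a R : ed (a::R) R <= 1.
Proof. case: R => [|x R]; first by []. rewrite edE ed_refl; lia. Qed.
Definition okL (done : seq str) (rest : str) L :=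
  has (fun j => suffix (take L rest) (flatten (take j done))) (iota 0 (size done).+1).

Lemma match_ok done rest : okL done rest (lzend_match done rest).
Proof.
rewrite /lzend_match.
have Hpos : 0 < #|[pred L : 'I_(size rest).+1 | okL done rest L]|.
  apply/card_gt0P; exists ord0; rewrite inE /okL /=.
  by rewrite !take0 suffix_refl.
have [i0 Hi0 E] := eq_bigmax_cond (fun L => nat_of_ord L) Hpos.
suff: okL done rest (\max_(i in [pred L : 'I_(size rest).+1 | okL done rest L]) nat_of_ord i) by [].
by rewrite E.
Qed.

Lemma match_le done rest L : L <= size rest -> okL done rest L -> L <= lzend_match done rest.
Proof.
move=> HL Hok; rewrite /lzend_match.
exact: (@leq_bigmax_cond _ (fun L : 'I_(size rest).+1 => okL done rest L) (fun L => nat_of_ord L) (Ordinal (n:=(size rest).+1) (m:=L) HL)).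
Qed.

Lemma match_ge done rest b : (forall L, L <= size rest -> okL done rest L -> L <= b) -> lzend_match done rest <= b.
Proof.
move=> H; rewrite /lzend_match; apply/bigmax_leqP => i Hi.
apply: H => //; exact: (ltn_ord i).
Qed.

Lemma okL_infix done rest L : okL done rest L -> infix (take L rest) (flatten done).
Proof.
move=> /hasP [j _ Hj].
apply: (suffix_infix_trans Hj).
rewrite -{2}(cat_take_drop j done) flatten_cat; exact: prefix_infix.
Qed.

Fixpoint nov (ctx : str) (bs : seq str) : nat :=
  if bs is b :: bs' then ((b != [::]) && ~~ infix b ctx) + nov (ctx ++ b) bs' else 0.

Lemma nov_nil ctx bs : flatten bs = [::] -> nov ctx bs = 0.
Proof.
elim: bs ctx => //= b bs IH ctx.
case: b => //= H; rewrite IH //.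
Qed.

Lemma dropl_cat (T : Type) n (s1 s2 : seq T) : n <= size s1 -> drop n (s1 ++ s2) = drop n s1 ++ s2.
Proof.
rewrite drop_cat leq_eqVlt => /orP [/eqP ->|->] //.
by rewrite ltnn subnn drop0 drop_size.
Qed.

Lemma taker_cat (T : Type) n (s1 s2 : seq T) : size s1 <= n -> take n (s1 ++ s2) = s1 ++ take (n - size s1) s2.
Proof. by rewrite take_cat ltnNge => ->. Qed.

Lemma dropr_cat (T : Type) n (s1 s2 : seq T) : size s1 <= n -> drop n (s1 ++ s2) = drop (n - size s1) s2.
Proof. by rewrite drop_cat ltnNge => ->. Qed.

Lemma nov_step bs ctx l : 0 < l -> l <= size (flatten bs) ->
  infix (take l.-1 (flatten bs)) ctx ->
  exists bs', flatten bs' = drop l (flatten bs) /\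
     nov ctx bs <= (nov (ctx ++ take l (flatten bs)) bs').+1.
Proof.
elim: bs ctx l => [|b bs IH] ctx l Hl //=.
  by rewrite leqNgt Hl.
move=> Hsz Hinf.
case: (leqP l (size b)) => Hlb.
  exists (drop l b :: bs); split; first by rewrite /= dropl_cat.
  rewrite takel_cat //= -catA cat_take_drop.
  move: (_ && _) (_ && _) => x y; case: x; case: y => /=; rewrite ?add0n ?add1n; by [exact: leqnSn | exact: leqW (leqnSn _) | exact: leqnn].
have Hb : infix b ctx.
  apply: (infix_trans _ Hinf).
  rewrite taker_cat; last by rewrite -ltnS (ltn_predK Hlb).
  exact: prefix_infix.
have Hi2 : infix (take (l - size b).-1 (flatten bs)) (ctx ++ b).
  apply: infix_catr; apply: (infix_trans _ Hinf).
  rewrite taker_cat; last by rewrite -ltnS (ltn_predK Hlb).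
  have -> : l.-1 - size b = (l - size b).-1 by rewrite -!subn1 subnAC.
  exact: suffix_infix.
have [bs' [E1 E2]] := IH (ctx ++ b) (l - size b) ltac:(by rewrite subn_gt0) ltac:(by rewrite leq_subLR -size_cat) Hi2.
exists bs'; split.
  by rewrite E1 dropr_cat // ltnW.
rewrite Hb andbF add0n taker_cat ?(ltnW Hlb) // catA; exact: E2.
Qed.

Lemma flatten_rcons' (s : seq str) x : flatten (rcons s x) = flatten s ++ x.
Proof. by rewrite -cats1 flatten_cat /= cats0. Qed.

Lemma nov_lzend fuel done rest bs : size rest <= fuel -> flatten bs = rest ->
  nov (flatten done) bs <= size (lzend_rec fuel done rest).
Proof.
elim: fuel done rest bs => [|fuel IH] done rest bs.
  by rewrite leqn0 => /nilP -> /nov_nil ->.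
case: rest => [|x r]; first by move=> _ /nov_nil ->.
move=> Hsz Hbs.
set rest := x :: r.
rewrite [lzend_rec _ _ _]/= -/rest.
set m := lzend_match done rest.
set l := minn m.+1 (size rest).
have Htake : take l rest = take m.+1 rest.
  rewrite /l /minn; case: ltnP => // H; by rewrite take_size take_oversize.
have Hdrop : drop l rest = drop m.+1 rest.
  rewrite /l /minn; case: ltnP => // H; by rewrite drop_size drop_oversize.
have Hl0 : 0 < l by rewrite /l leq_min.
have Hl1 : l <= size (flatten bs) by rewrite Hbs /l geq_minr.
have Hinf : infix (take l.-1 (flatten bs)) (flatten done).
  have Hm := okL_infix (match_ok done rest).
  apply: (prefix_infix_trans _ Hm).
  have -> : take l.-1 (flatten bs) = take l.-1 (take m rest).
    rewrite Hbs -take_min; congr take; apply/esym/minn_idPl.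
    by rewrite -ltnS (ltn_predK Hl0) /l geq_minl.
  exact: prefix_take.
have [bs' [E1 E2]] := nov_step Hl0 Hl1 Hinf.
apply: (leq_trans E2); rewrite /= ltnS.
rewrite Hbs Htake -flatten_rcons'.
apply: IH; last by rewrite E1 Hbs Hdrop.
rewrite size_drop leq_subLR; move: Hsz; rewrite /= ltnS => Hsz; exact: (leq_trans Hsz (leq_addl _ _)).
Qed.

Fixpoint good (done : seq str) (ps : seq str) : Prop :=
  match ps with
  | [::] => True
  | p :: ps' => (exists u c, p = rcons u c /\ c \notin flatten done ++ u /\
                  exists j, j <= size done /\ suffix u (flatten (take j done)))
                /\ good (rcons done p) ps'
  end.

Lemma match_exact done u c r : c \notin flatten done ++ u ->
  (exists j, j <= size done /\ suffix u (flatten (take j done))) ->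
  lzend_match done (u ++ c :: r) = size u.
Proof.
move=> Hc [j [Hj Hs]].
apply/eqP; rewrite eqn_leq; apply/andP; split.
  apply: match_ge => L HL Hok.
  rewrite leqNgt; apply/negP => HuL.
  have Hsub := mem_infix (okL_infix Hok).
  have Hin : c \in take L (u ++ c :: r).
    rewrite taker_cat ?(ltnW HuL) //.
    have -> : L - size u = (L - size u).-1.+1 by rewrite prednK // subn_gt0.
    by rewrite /= mem_cat inE eqxx orbT.
  by move: Hc; rewrite mem_cat (Hsub _ Hin).
apply: match_le; first by rewrite size_cat leq_addr.
apply/hasP; exists j; first by rewrite mem_iota add0n ltnS.
by rewrite take_size_cat.
Qed.

Lemma lzend_exact fuel done ps : size (flatten ps) <= fuel -> good done ps ->
  lzend_rec fuel done (flatten ps) = ps.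
Proof.
elim: ps fuel done => [|p ps IH] fuel done; first by case: fuel.
move=> Hsz [[u [c [Ep [Hc Hj]]]] Hg]; subst p.
rewrite /= cat_rcons in Hsz *.
case: fuel Hsz => [|fuel]; first by rewrite size_cat /= addnS ltn0.
move=> Hsz.
case E: (u ++ c :: flatten ps) => [|y ys]; first by case: u {Hg Hc Hj Hsz} E.
cbn [lzend_rec]; rewrite -E (match_exact _ Hc Hj).
have -> : take (size u).+1 (u ++ c :: flatten ps) = rcons u c.
  by rewrite taker_cat // subSnn /= take0 cats1.
have -> : drop (size u).+1 (u ++ c :: flatten ps) = flatten ps.
  by rewrite dropr_cat // subSnn /= drop0.
congr cons; apply: IH => //.
by move: Hsz; rewrite size_cat /= addnS ltnS; apply: leq_trans; rewrite leq_addl.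
Qed.
Definition Al t : str := rev (iota 1 t).
Definition Bl t : str := iota t.+1 t.
Definition src t : str := Al t ++ Bl t ++ [:: (2*t).+1].
Definition body t k : str := rev (iota 1 (k %/ t).+1) ++ iota t.+1 (k %% t).+1.
Definition cc t k := 2*t + 2 + k.
Definition ph t k : str := rcons (body t k) (cc t k).
Definition Qph t : seq str := map (ph t) (iota 0 (t*t)).
Definition Xs t : str := src t ++ flatten (Qph t).
Definition hh t r : str := rcons (drop (size (Xs t) - r) (Xs t)) (cc t (t*t)).
Definition TT t r : str := Xs t ++ hh t r.
Definition Bp kd t : str :=
  match kd with Defs.Sub => 0 :: behead (Bl t) | Defs.Ins => 0 :: Bl t | Defs.Del => behead (Bl t) end.
Definition srcp kd t : str := Al t ++ Bp kd t ++ [:: (2*t).+1].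
Definition TT' kd t r : str := srcp kd t ++ flatten (Qph t) ++ hh t r.

Lemma size_ph t k : size (ph t k) = k %/ t + k %% t + 3.
Proof. rewrite /ph size_rcons size_cat size_rev !size_iota; lia. Qed.

Lemma row_sum m n : 2 * sumn (map (fun b => m + b + 3) (iota 0 n)) + n = 2*n*m + n*n + 6*n.
Proof.
elim: n => [|n IH] //.
have -> : iota 0 n.+1 = iota 0 n ++ [:: n] by rewrite -addn1 iotaD.
rewrite map_cat sumn_cat /= addn0.
nia.
Qed.

Lemma row_size t m : 0 < t ->
  size (flatten (map (ph t) (iota (m*t) t))) = sumn (map (fun b => m + b + 3) (iota 0 t)).
Proof.
move=> t0.
rewrite size_flatten /shape -(addn0 (m*t)) iotaDl -!map_comp.
congr sumn; apply/eq_in_map => b; rewrite mem_iota add0n => /andP [_ Hb] /=.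
by rewrite size_ph divnMDl // modnMDl (divn_small Hb) (modn_small Hb) addn0.
Qed.

Lemma sizeQ t m : 0 < t -> 2 * size (flatten (map (ph t) (iota 0 (m*t)))) + m*t = t*m*m + m*t*t + 5*m*t.
Proof.
move=> t0.
elim: m => [|m IH]; first by rewrite !mul0n !muln0.
have -> : m.+1 * t = m*t + t by rewrite mulSn addnC.
rewrite iotaD map_cat flatten_cat size_cat add0n row_size //.
have := row_sum m t.
nia.
Qed.

Lemma sizeX t : 0 < t -> size (Xs t) = t^3 + 2*t^2 + 2*t + 1.
Proof.
move=> t0; rewrite /Xs size_cat /Qph.
have := sizeQ t t0.
rewrite /src !size_cat size_rev !size_iota /=.
nia.
Qed.

Lemma good_cat done ps1 ps2 : good done ps1 -> good (done ++ ps1) ps2 -> good done (ps1 ++ ps2).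
Proof.
elim: ps1 done => [|p ps1 IH] done /=; first by rewrite cats0.
move=> [H1 H2] H3; split => //; apply: IH => //; by rewrite cat_rcons.
Qed.

Definition sing (s : str) : seq str := map (fun x => [:: x]) s.

Lemma flatten_sing s : flatten (sing s) = s.
Proof. by elim: s => //= x s ->. Qed.

Lemma good_sing done s : uniq s -> (forall x, x \in s -> x \notin flatten done) -> good done (sing s).
Proof.
elim: s done => [|x s IH] done //= /andP [Hx Hu] H; split.
  exists [::], x; split => //; split; first by rewrite cats0 H // inE eqxx.
  by exists 0; rewrite take0.
apply: IH => // y Hy; rewrite flatten_rcons' mem_cat negb_or H ?inE ?Hy ?orbT //=.
by apply/negP => /eqP E; subst; rewrite Hy in Hx.
Qed.

Lemma nov_cat ctx bs1 bs2 : nov ctx (bs1 ++ bs2) = nov ctx bs1 + nov (ctx ++ flatten bs1) bs2.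
Proof.
elim: bs1 ctx => [|b bs1 IH] ctx /=; first by rewrite cats0.
by rewrite IH catA addnA.
Qed.

Lemma nov_sing ctx s : uniq s -> (forall x, x \in s -> x \notin ctx) -> nov ctx (sing s) = size s.
Proof.
elim: s ctx => [|x s IH] ctx //= /andP [Hx Hu] H.
rewrite infix1s H ?inE ?eqxx // IH // => y Hy; rewrite mem_cat negb_or H ?inE ?Hy ?orbT //=.
by apply/negP => /eqP E; subst; rewrite Hy in Hx.
Qed.

Lemma mem_body t k x : (x \in body t k) = (0 < x <= (k %/ t).+1) || (t < x <= t + (k %% t).+1).
Proof. rewrite /body mem_cat mem_rev !mem_iota; congr orb; lia. Qed.

Lemma divt t k : 0 < t -> k < t * t -> k %/ t < t.
Proof. by move=> t0 kt; rewrite ltn_divLR. Qed.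

Lemma modt t k : 0 < t -> k %% t < t.
Proof. move=> t0; exact: ltn_pmod. Qed.

Lemma body_le t k x : 0 < t -> k < t * t -> x \in body t k -> x <= 2 * t.
Proof.
move=> t0 kt; rewrite mem_body.
have := divt t0 kt; have := modt k t0; lia.
Qed.

Lemma body_nil t k : body t k != [::].
Proof. by rewrite /body /= rev_cons; case: (rev _). Qed.

Lemma mem_src t x : x \in src t -> x <= (2*t).+1.
Proof. rewrite /src /Al /Bl !mem_cat mem_rev !mem_iota inE; lia. Qed.

Lemma mem_Bp kd t x : x \in Bp kd t -> (x == 0) || (t < x <= 2 * t).
Proof.
have H : x \in behead (Bl t) -> t < x <= 2 * t.
  case: t => [|t] //=; rewrite /Bl /= mem_iota; lia.
case: kd; rewrite /Bp ?inE.
- by case/orP => [->//|/H ->]; rewrite orbT.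
- rewrite /Bl mem_iota; lia.
- by move/H => ->; rewrite orbT.
Qed.

Lemma uniq_catI (s1 s2 : str) : uniq s1 -> uniq s2 -> (forall x, x \in s1 -> x \notin s2) -> uniq (s1 ++ s2).
Proof.
move=> u1 u2 H; rewrite cat_uniq u1 u2 andbT /=.
apply/hasPn => x Hx; apply/negP => Hx1; by rewrite (negbTE (H _ Hx1)) in Hx.
Qed.

Lemma uniq_src t : uniq (src t).
Proof.
rewrite /src /Al /Bl; apply: uniq_catI.
- by rewrite rev_uniq iota_uniq.
- apply: uniq_catI => //; first exact: iota_uniq.
  move=> x; rewrite mem_iota !inE; lia.
- move=> x; rewrite mem_rev mem_iota mem_cat mem_iota inE; lia.
Qed.

Lemma uniq_srcp kd t : uniq (srcp kd t).
Proof.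
have uB : uniq (Bp kd t).
  have ub : uniq (behead (Bl t)) by case: t => [|t] //=; rewrite /Bl /=; case/andP: (iota_uniq t.+2 t.+1).
  case: kd => //=.
  - rewrite ub andbT; apply/negP; case: t {ub} => [|t] //=; rewrite /Bl /= mem_iota; lia.
  - rewrite iota_uniq andbT /Bl mem_iota; lia.
rewrite /srcp /Al; apply: uniq_catI.
- by rewrite rev_uniq iota_uniq.
- apply: uniq_catI => // x /mem_Bp; rewrite !inE; lia.
- move=> x; rewrite mem_rev mem_iota mem_cat inE => Hx.
  apply/negP => /orP [/mem_Bp|]; lia.
Qed.

Lemma mem_srcp kd t x : x \in srcp kd t -> x <= (2*t).+1.
Proof.
rewrite /srcp /Al mem_cat mem_rev mem_iota mem_cat inE => /orP [|/orP [/mem_Bp|]]; lia.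
Qed.

Lemma mem_Qa t a x : 0 < t -> a <= t * t -> x \in flatten (map (ph t) (iota 0 a)) -> x < cc t a.
Proof.
move=> t0 at2 /flatten_mapP [k]; rewrite mem_iota add0n => /andP [_ ka].
rewrite /ph mem_rcons inE => /orP [/eqP ->|Hb].
  by rewrite /cc ltn_add2l.
have := body_le t0 (leq_trans ka at2) Hb; rewrite /cc; lia.
Qed.

Lemma iotaS0 a : iota 0 a.+1 = rcons (iota 0 a) a.
Proof. by rewrite -addn1 iotaD cats1. Qed.

Lemma suffix_body t k : 0 < t -> k < t * t ->
  suffix (body t k) (flatten (take (t + (k %% t).+1) (sing (src t)))).
Proof.
move=> t0 kt.
have Hi := divt t0 kt; have Hj := modt k t0.
rewrite /sing -map_take flatten_sing /src /Al /Bl catA.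
rewrite takel_cat; last by rewrite size_cat size_rev !size_iota; lia.
rewrite taker_cat; last by rewrite size_rev size_iota; lia.
rewrite size_rev size_iota.
rewrite take_iota addKn; have -> : minn (k %% t).+1 t = (k %% t).+1 by lia.
rewrite /body suffix_catl //; apply/andP; split => //.
have E : iota 1 t = iota 1 (k %/ t).+1 ++ iota (1 + (k %/ t).+1) (t - (k %/ t).+1).
  by rewrite -iotaD; congr iota; lia.
by rewrite E rev_cat suffix_suffix.
Qed.

Lemma flat_done t a : flatten (sing (src t) ++ map (ph t) (iota 0 a)) = src t ++ flatten (map (ph t) (iota 0 a)).
Proof. by rewrite flatten_cat flatten_sing. Qed.

Lemma good_Q t : 0 < t -> forall m a, a + m = t * t ->
  good (sing (src t) ++ map (ph t) (iota 0 a)) (map (ph t) (iota a m)).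
Proof.
move=> t0; elim=> [|m IH] a Ham //=.
have at2 : a < t * t by lia.
split.
  exists (body t a), (cc t a); split => //; split.
    rewrite flat_done -catA; apply/negP; rewrite mem_cat => /orP [H|].
      by have := mem_src H; rewrite /cc; lia.
    rewrite mem_cat => /orP [H|H].
      by have := mem_Qa t0 (ltnW at2) H; rewrite ltnn.
    by have := body_le t0 at2 H; rewrite /cc; lia.
  exists (t + (a %% t).+1); split.
    rewrite size_cat /sing size_map /src !size_cat /Al /Bl size_rev !size_iota /=.
    have := modt a t0; lia.
  rewrite takel_cat; first exact: suffix_body.
  rewrite /sing size_map /src !size_cat /Al /Bl size_rev !size_iota /=.
  have := modt a t0; lia.
rewrite rcons_cat -map_rcons -iotaS0.
apply: IH; lia.
Qed.

Definition PS t r : seq str := sing (src t) ++ Qph t ++ [:: hh t r].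

Lemma flatten_PS t r : flatten (PS t r) = TT t r.
Proof. by rewrite /PS !flatten_cat flatten_sing /= cats0 /TT /Xs catA. Qed.

Lemma good_PS t r : 0 < t -> good [::] (PS t r).
Proof.
move=> t0; rewrite /PS; apply: good_cat.
  by apply: good_sing; [exact: uniq_src|].
apply: good_cat; first by have := @good_Q t t0 (t * t) 0 (add0n _); rewrite /= cats0.
rewrite /= ; split => //.
exists (drop (size (Xs t) - r) (Xs t)), (cc t (t * t)); split => //; split.
  have H : forall x, x \in Xs t -> x < cc t (t * t).
    move=> x; rewrite /Xs mem_cat => /orP [H|H]; last exact: mem_Qa t0 (leqnn _) H.
    have := mem_src H; rewrite /cc; lia.
  rewrite mem_cat negb_or; apply/andP; split.
    rewrite flatten_cat flatten_sing -/(Xs t); apply/negP => /H; by rewrite ltnn.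
  by apply/negP => /mem_drop /H; rewrite ltnn.
exists (size (sing (src t) ++ Qph t)); split => //.
by rewrite take_size flatten_cat flatten_sing -/(Xs t) suffix_drop.
Qed.

Lemma zEnd_T t r : 0 < t -> zEnd (TT t r) = t * t + 2 * t + 2.
Proof.
move=> t0; rewrite /zEnd /lzend -flatten_PS lzend_exact //; last exact: good_PS.
by rewrite /PS !size_cat /sing size_map /Qph size_map size_iota /src !size_cat /Al /Bl size_rev !size_iota /=; lia.
Qed.

Lemma prefix_sep (w x y : str) c : c \notin w -> prefix w (x ++ c :: y) -> prefix w x.
Proof.
elim: x w => [|a x IH] [|b w] //=.
  by rewrite inE negb_or => /andP [Hcb _] /andP [/eqP Ebc _]; rewrite Ebc eqxx in Hcb.
rewrite inE negb_or => /andP [_ Hw] /andP [-> Hp] /=; exact: IH Hw Hp.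
Qed.

Lemma infix_sep (w x y : str) c : c \notin w -> infix w (x ++ c :: y) -> infix w x || infix w y.
Proof.
move=> Hc; elim: x => [|a x IH].
  rewrite cat0s infix_consl => /orP [|->]; last by rewrite orbT.
  case: w Hc => [|b w] Hc; first by rewrite infix0s. rewrite /=.
  by move/andP => [/eqP E _]; subst; rewrite inE eqxx in Hc.
rewrite cat_cons infix_consl => /orP [Hp|/IH].
  have : prefix w (a :: x) by apply: (prefix_sep Hc); rewrite /=; exact: Hp.
  by move/prefixW; rewrite infix_consl => ->.
by case/orP => [H|->]; rewrite ?orbT // infix_consl H orbT.
Qed.

Lemma infix_uocc (a : nat) (w p q : str) : a \notin p -> a \notin q -> infix (a :: w) (p ++ a :: q) -> prefix w q.
Proof.
move=> Hp Hq; elim: p Hp => [|b p IH].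
  move=> _; rewrite cat0s infix_consl => /orP [/=|]; first by rewrite eqxx.
  by move/mem_infix => /(_ a); rewrite inE eqxx => /(_ isT) H; rewrite H in Hq.
rewrite inE negb_or => /andP [Hab Hp].
rewrite cat_cons infix_consl => /orP [/= /andP [/eqP E _]|]; first by rewrite E eqxx in Hab.
exact: IH.
Qed.

Lemma body_pair t k : 0 < t -> infix [:: 1; t.+1] (body t k).
Proof.
move=> t0; rewrite /body.
have -> : iota 1 (k %/ t).+1 = 1 :: iota 2 (k %/ t) by [].
have -> : iota t.+1 (k %% t).+1 = t.+1 :: iota t.+2 (k %% t) by [].
rewrite rev_cons cat_rcons.
exact: (infix_infix (rev (iota 2 (k %/ t))) [:: 1; t.+1] (iota t.+2 (k %% t))).
Qed.

Lemma body_notin_src kd t k : 0 < t -> ~~ infix (body t k) (Al t ++ Bp kd t).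
Proof.
move=> t0; apply/negP => H.
have H2 := infix_trans (body_pair k t0) H.
case: t t0 H H2 => [|t] // _ _.
have -> : Al t.+1 = rcons (rev (iota 2 t)) 1 by rewrite /Al /= rev_cons.
rewrite cat_rcons => /infix_uocc.
have H1 : 1 \notin rev (iota 2 t) by rewrite mem_rev mem_iota.
have H3 : 1 \notin Bp kd t.+1 by apply/negP => /mem_Bp; lia.
move=> /(_ H1 H3).
case: kd {H3} => //=; rewrite /Bl /=.
by case: t {H1} => [|t] //=; rewrite eqSS; case: eqP => //; lia.
Qed.

Lemma infix_body_Q t a s : 0 < t -> a < t * t ->
  infix (body t a) (flatten (map (ph t) s)) -> exists2 k, k \in s & infix (body t a) (body t k).
Proof.
move=> t0 at2; elim: s => [|k s IH].
  move=> H; have := body_nil t a; rewrite -infixs0. by move: H => /= ->.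
rewrite /= /ph cat_rcons => /infix_sep.
have Hc : cc t k \notin body t a by apply/negP => /(body_le t0 at2); rewrite /cc; lia.
move=> /(_ Hc) /orP [H|/IH [k' Hk' H]].
  by exists k; rewrite ?inE ?eqxx.
by exists k'; rewrite // inE Hk' orbT.
Qed.

Lemma dom t a k : 0 < t -> a < t * t -> k < t * t -> infix (body t a) (body t k) -> a <= k.
Proof.
move=> t0 at2 kt2 /mem_infix H.
have Ha := divt t0 at2; have Hk := divt t0 kt2.
have Ma := modt a t0; have Mk := modt k t0.
have H1 := H (a %/ t).+1 ltac:(by rewrite mem_body leqnn).
have H2 := H (t + (a %% t).+1) ltac:(rewrite mem_body; apply/orP; right; lia).
rewrite mem_body in H1; rewrite mem_body in H2.
have E1 : a %/ t <= k %/ t by move: H1; lia.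
have E2 : a %% t <= k %% t by move: H2; lia.
rewrite (divn_eq a t) (divn_eq k t).
apply: leq_add => //; exact: leq_mul.
Qed.

Definition blk t k : seq str := [:: body t k; [:: cc t k]].
Definition BS' kd t r : seq str := sing (srcp kd t) ++ flatten (map (blk t) (iota 0 (t * t))) ++ [:: hh t r].

Lemma flatten_blk t s : flatten (flatten (map (blk t) s)) = flatten (map (ph t) s).
Proof. elim: s => //= k s IH; by rewrite -IH /ph cat_rcons. Qed.

Lemma flatten_BS' kd t r : flatten (BS' kd t r) = TT' kd t r.
Proof. by rewrite /BS' !flatten_cat flatten_sing flatten_blk /= cats0. Qed.

Lemma nov_Q kd t : 0 < t -> forall m a, a + m = t * t ->
  nov (srcp kd t ++ flatten (map (ph t) (iota 0 a))) (flatten (map (blk t) (iota a m))) = 2 * m.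
Proof.
move=> t0; elim=> [|m IH] a Ham; first by rewrite muln0.
have at2 : a < t * t by lia.
rewrite /= (negbTE (body_nil _ _)) /=.
have N1 : ~~ infix (body t a) (srcp kd t ++ flatten [seq ph t i | i <- iota 0 a]).
  apply/negP; rewrite /srcp -!catA /= catA => /infix_sep.
  have Hc : (2 * t).+1 \notin body t a by apply/negP => /(body_le t0 at2); lia.
  move=> /(_ Hc) /orP [H|].
    by have := body_notin_src kd a t0; rewrite H.
  move=> /(infix_body_Q t0 at2) [k]; rewrite mem_iota add0n => /andP [_ ka].
  move=> /(dom t0 at2 (ltn_trans ka at2)); lia.
have N2 : ~~ infix [:: cc t a] ((srcp kd t ++ flatten [seq ph t i | i <- iota 0 a]) ++ body t a).
  rewrite infix1s; apply/negP; rewrite mem_cat => /orP [|H]; last first.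
    by have := body_le t0 at2 H; rewrite /cc; lia.
  rewrite mem_cat => /orP [H|H].
    by have := mem_srcp H; rewrite /cc; lia.
  by have := mem_Qa t0 (ltnW at2) H; rewrite ltnn.
rewrite N1 N2.
have -> : ((srcp kd t ++ flatten [seq ph t i | i <- iota 0 a]) ++ body t a) ++ [:: cc t a] =
          srcp kd t ++ flatten [seq ph t i | i <- iota 0 a.+1].
  by rewrite iotaS0 map_rcons flatten_rcons' /ph -cats1 !catA.
rewrite IH; lia.
Qed.

Lemma size_srcp kd t : 0 < t -> 2 * t <= size (srcp kd t).
Proof.
move=> t0; rewrite /srcp !size_cat /Al size_rev size_iota /=.
case: kd; rewrite /Bp /Bl /= ?size_behead size_iota; lia.
Qed.

Lemma zEnd_T' kd t r : 0 < t -> 2 * t * t + 2 * t + 1 <= zEnd (TT' kd t r).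
Proof.
move=> t0.
have H := @nov_lzend (size (TT' kd t r)) [::] (TT' kd t r) (BS' kd t r) (leqnn _) (flatten_BS' _ _ _).
apply: leq_trans H; rewrite /BS' nov_cat nov_cat /= flatten_sing.
rewrite nov_sing //; last exact: uniq_srcp.
have := @nov_Q kd t t0 (t * t) 0 (add0n _); rewrite /= cats0 => ->.
rewrite flatten_blk.
have Hh : ~~ infix (hh t r) (srcp kd t ++ flatten [seq ph t i | i <- iota 0 (t * t)]).
  apply/negP => /mem_infix /(_ (cc t (t * t))).
  rewrite /hh mem_rcons inE eqxx => /(_ isT).
  rewrite mem_cat => /orP [H|H].
    by have := mem_srcp H; rewrite /cc; lia.
  by have := mem_Qa t0 (leqnn _) H; rewrite ltnn.
have Hne : hh t r != [::] by rewrite /hh; case: (drop _ _).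
rewrite Hh Hne /=.
have := size_srcp kd t0; lia.
Qed.

Lemma Bl_cons t : 0 < t -> Bl t = t.+1 :: behead (Bl t).
Proof. by case: t. Qed.

Lemma edit_ok kd t r : 0 < t -> is_edit kd (TT t r) (TT' kd t r).
Proof.
move=> t0.
set R := (2 * t).+1 :: flatten (Qph t) ++ hh t r.
have ET : TT t r = Al t ++ (t.+1 :: (behead (Bl t) ++ R)).
  by rewrite /TT /Xs /src {1}(Bl_cons t0) /R -!catA.
have ET' : TT' kd t r = Al t ++ (Bp kd t ++ R).
  by rewrite /TT' /srcp /R -!catA.
clearbody R.
have Hne : ed (TT t r) (TT' kd t r) != 0.
  apply/negP => /eqP /ed0; rewrite ET ET'.
  case: kd {ET'} => /=.
  - move/(congr1 (fun s => nth 0 s (size (Al t)))).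
    by rewrite !nth_cat ltnn subnn.
  - move/(congr1 size); rewrite !size_cat /= !size_cat size_behead /Bl size_iota; lia.
  - move/(congr1 size); rewrite !size_cat /= !size_cat; lia.
split.
  rewrite ET ET' !size_cat; case: kd {ET ET' Hne} => /=; rewrite ?size_cat ?size_behead /Bl ?size_iota; lia.
apply/eqP; rewrite eqn_leq lt0n Hne andbT.
rewrite ET ET'; apply: leq_trans (ed_cat _ _ _) _.
case: kd {ET ET' Hne}.
- exact: ed_sub.
- rewrite -cat_cons -(Bl_cons t0); exact: ed_ins.
- exact: ed_del.
Qed.

Definition g t := t*t*t + 2*t*t + 2*t + 1.

Lemma sizeX' t : 0 < t -> size (Xs t) = g t.
Proof. move=> t0; rewrite sizeX // /g; lia. Qed.

Lemma g_step t : 3 <= t -> g t.+1 <= 2 * g t + 1.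
Proof. rewrite /g => Ht; nia. Qed.

Lemma g_mono t : g t < g t.+1.
Proof. rewrite /g; nia. Qed.

Lemma cover t0 : 3 <= t0 -> forall n, g t0 < n -> exists t, t0 <= t /\ g t < n <= 2 * g t + 1.
Proof.
move=> H0; elim=> [|n IH] //.
rewrite ltnS leq_eqVlt => /orP [/eqP <-|/IH [t [Ht1 /andP [Ht2 Ht3]]]].
  exists t0; split => //; rewrite ltnSn /=; lia.
case: (ltnP n (2 * g t + 1)) => Hn.
  by exists t; split => //; apply/andP; split; lia.
exists t.+1; split; first lia.
have := g_step (leq_trans H0 Ht1); have := g_mono t.
move=> A B; apply/andP; split; lia.
Qed.

Lemma size_TT t r : 0 < t -> r <= g t -> size (TT t r) = g t + r + 1.
Proof.
move=> t0 Hr; rewrite /TT size_cat /hh size_rcons size_drop sizeX' //.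
lia.
Qed.

Unset Implicit Arguments.
Theorem mainTheorem16 :
  forall k : edit_kind,
    (forall j : nat, 0 < j ->
       exists N : nat, forall n : nat, N <= n ->
         exists T T' : str,
           size T = n /\ is_edit k T T' /\
           (2 * j - 1) * zEnd T <= j * zEnd T')
    /\
    (exists c : nat, forall m : nat,
       exists T T' : str,
         m <= zEnd T /\ is_edit k T T' /\
         (2 * zEnd T - zEnd T') ^ 2 <= c * zEnd T)
    /\
    (exists c N : nat, 0 < c /\ forall n : nat, N <= n ->
       exists T T' : str,
         size T = n /\ is_edit k T T' /\
         n <= (c * (zEnd T' - zEnd T)) ^ 2).
Proof.
move=> kd; split; [|split].
- move=> j j0.
  exists (g (2 * j + 3)).+1 => n Hn.
  have [t [Ht1 /andP [Ht2 Ht3]]] := @cover (2 * j + 3) ltac:(lia) n Hn.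
  have t0 : 0 < t by lia.
  exists (TT t (n - g t - 1)), (TT' kd t (n - g t - 1)); split; last split.
  + rewrite size_TT //; lia.
  + exact: edit_ok.
  + rewrite zEnd_T //.
    have H := zEnd_T' kd (n - g t - 1) t0.
    apply: (leq_trans _ (leq_mul (leqnn j) H)).
    nia.
- exists 9 => m.
  have t0 : 0 < m.+1 by [].
  exists (TT m.+1 0), (TT' kd m.+1 0); split; last split.
  + rewrite zEnd_T //; nia.
  + exact: edit_ok.
  + rewrite zEnd_T //.
    have H := zEnd_T' kd 0 t0.
    have H2 : 2 * (m.+1 * m.+1 + 2 * m.+1 + 2) - zEnd (TT' kd m.+1 0) <= 2 * m.+1 + 3 by lia.
    rewrite expnS expn1; apply: leq_trans (leq_mul H2 H2) _; nia.
- exists 2, (g 4).+1; split => // n Hn.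
  have [t [Ht1 /andP [Ht2 Ht3]]] := @cover 4 ltac:(lia) n Hn.
  have t0 : 0 < t by lia.
  exists (TT t (n - g t - 1)), (TT' kd t (n - g t - 1)); split; last split.
  + rewrite size_TT //; lia.
  + exact: edit_ok.
  + rewrite zEnd_T //.
    have H := zEnd_T' kd (n - g t - 1) t0.
    have H2 : 2 * (t * t - 1) <= 2 * (zEnd (TT' kd t (n - g t - 1)) - (t * t + 2 * t + 2)) by lia.
    rewrite expnS expn1; apply: leq_trans (leq_mul H2 H2).
    move: Ht3; rewrite /g; nia.
Qed.
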